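(* Let $\mathcal X$ be a finite set and $(F_x)_{x\in\mathcal X}$ mutually independent real random variables. Let $\epsilon>0$ and let $f_0\le f_1\le\dots\le f_l$ in $\mathbb R\cup\{\pm\infty\}$ with $f_0=-\infty$, $f_l=+\infty$, such that $\max_{x}\mathbb P[F_x\le f_1]\le2\epsilon$, $\max_x\mathbb P[F_x>f_{l-1}]\le2\epsilon$, and $\max_x\mathbb P[F_x\in(f_i,f_{i+1}]]\le2\epsilon$ for all $i=1,\dots,l-2$. Then for every $x\in\mathcal X$, $$\Big|\mathbb P[x\in X^*]-\sum_{i=0}^{l-1}\frac{g_x(f_{i+1})+g_x(f_i)}{2}\,\mathbb P[F_x\in(f_i,f_{i+1}]]\Big|\le\epsilon .$$
   Context: $X^*:=\arg\max_{z\in\mathcal X}F_z$ (a random subset), so $x\in X^*$ iff $F_x\ge F_z$ for all $z\neq x$. For $f\in\mathbb R\cup\{\pm\infty\}$, $g_x(f):=\prod_{z\in\mathcal X\setminus\{x\}}\mathbb P[F_z\le f]$ (so $g_x(-\infty)=0$, $g_x(+\infty)=1$). *)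

(* Defs.v *)
From HB Require Import structures.
From mathcomp Require Import all_boot all_order all_algebra.
From mathcomp Require Import all_classical all_reals all_analysis.
Set Implicit Arguments. Unset Strict Implicit. Unset Printing Implicit Defensive.
Import Order.TTheory GRing.Theory Num.Theory.
Local Open Scope classical_set_scope.
Local Open Scope ring_scope.

Definition mutually_independent d (T : measurableType d) (R : realType)
  (P : probability T R) (I : finType) (F : I -> {RV P >-> R}) : Prop :=
  forall (S : {set I}) (B : I -> set R), (forall i, measurable (B i)) ->
    P (\big[setI/setT]_(i in S) (F i @^-1` B i)) =
    (\prod_(i in S) P (F i @^-1` B i))%E.

Definition prb d (T : measurableType d) (R : realType)
  (P : probability T R) (A : set T) : R := fine (P A).

Definition in_argmax d (T : measurableType d) (R : realType)
  (P : probability T R) (I : finType) (F : I -> {RV P >-> R}) (x : I) : set T :=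
  [set w | forall z, F z w <= F x w].

Definition gx d (T : measurableType d) (R : realType)
  (P : probability T R) (I : finType) (F : I -> {RV P >-> R}) (x : I)
  (f : \bar R) : R :=
  \prod_(z in I | z != x) prb P [set w | ((F z w)%:E <= f)%E].

Definition in_ioc d (T : measurableType d) (R : realType)
  (P : probability T R) (I : finType) (F : I -> {RV P >-> R}) (x : I)
  (a b : \bar R) : set T :=
  [set w | (a < (F x w)%:E)%E /\ ((F x w)%:E <= b)%E].

(* Main.v *)
Require Import Defs.
From HB Require Import structures.
From mathcomp Require Import all_boot all_order all_algebra.
From mathcomp Require Import all_classical all_reals all_analysis.
From mathcomp Require Import lra zify measurable_realfun.
Import Order.TTheory GRing.Theory Num.Theory.
Local Open Scope classical_set_scope.
Local Open Scope ring_scope.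

Lemma bigI_seqP (T : Type) (U : eqType) (s : seq U) (Q : pred U) (A : U -> set T) w :
  (\big[setI/setT]_(i <- s | Q i) A i) w <-> (forall i, i \in s -> Q i -> A i w).
Proof.
elim: s => [|a s IH]; first by rewrite big_nil; split.
rewrite big_cons; split.
- case: ifP => Qa.
  + move=> [Aw /IH H] i; rewrite inE => /orP [/eqP -> //|]; exact: H.
  + move=> /IH H i; rewrite inE => /orP [/eqP ->|]; [by rewrite Qa|exact: H].
- move=> H; case: ifP => Qa.
  + split; first by apply: H => //; rewrite inE eqxx.
    by apply/IH => i si Qi; apply: H => //; rewrite inE si orbT.
  + by apply/IH => i si Qi; apply: H => //; rewrite inE si orbT.
Qed.

Lemma bigI_seq (T : Type) (U : eqType) (s : seq U) (Q : pred U) (A : U -> set T) :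
  \big[setI/setT]_(i <- s | Q i) A i = [set w | forall i, i \in s -> Q i -> A i w].
Proof. by apply/seteqP; split => w /bigI_seqP. Qed.

Lemma bigU_seqP (T : Type) (U : eqType) (s : seq U) (Q : pred U) (A : U -> set T) w :
  (\big[setU/set0]_(i <- s | Q i) A i) w <-> (exists i, [/\ i \in s, Q i & A i w]).
Proof.
elim: s => [|a s IH]; first by rewrite big_nil; split => // -[i []].
rewrite big_cons; split.
- case: ifP => Qa.
  + move=> [Aw|/IH]; first by exists a; rewrite inE eqxx.
    by move=> -[i [si Qi Ai]]; exists i; rewrite inE si orbT.
  + by move=> /IH -[i [si Qi Ai]]; exists i; rewrite inE si orbT.
- move=> [i [+ Qi Ai]]; rewrite inE => /orP [/eqP ei|si].
  + by subst i; rewrite Qi; left.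
  + have H : (\big[setU/set0]_(j <- s | Q j) A j) w by apply/IH; exists i.
    by case: ifP => _ //; right.
Qed.


Lemma prbE (d : measure_display) (T : measurableType d) (R : realType) (P : probability T R) (A : set T) : measurable A -> P A = (prb P A)%:E.
Proof. by move=> mA; rewrite /prb fineK // fin_num_measure. Qed.

Lemma prb_ge0 (d : measure_display) (T : measurableType d) (R : realType) (P : probability T R) (A : set T) : 0 <= prb P A.
Proof. exact/fine_ge0/measure_ge0. Qed.

Lemma prb_le1 (d : measure_display) (T : measurableType d) (R : realType) (P : probability T R) (A : set T) : measurable A -> prb P A <= 1.
Proof. by move=> mA; rewrite -lee_fin -prbE // probability_le1. Qed.

Lemma prb_le (d : measure_display) (T : measurableType d) (R : realType) (P : probability T R) (A B : set T) : measurable A -> measurable B -> A `<=` B ->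
  prb P A <= prb P B.
Proof. by move=> mA mB AB; rewrite -lee_fin -!prbE //; apply: le_measure => //; rewrite inE. Qed.

Lemma meas_le (R : realType) (c : \bar R) : measurable [set r : R | (r%:E <= c)%E].
Proof.
case: c => [c||].
- have -> : [set r : R | (r%:E <= c%:E)%E] = [set` `]-oo, c]] by apply/seteqP; split => r /=; rewrite lee_fin in_itv.
  exact: measurable_itv.
- have -> : [set r : R | (r%:E <= +oo)%E] = setT by apply/seteqP; split => r //= _; exact: leey.
  exact: measurableT.
- have -> : [set r : R | (r%:E <= -oo)%E] = set0 by apply/seteqP; split => r //=; rewrite leeNy_eq.
  exact: measurable0.
Qed.

Lemma meas_ioc (R : realType) (a b : \bar R) :
  measurable [set r : R | (a < r%:E)%E /\ (r%:E <= b)%E].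
Proof.
have -> : [set r : R | (a < r%:E)%E /\ (r%:E <= b)%E] =
   (~` [set r : R | (r%:E <= a)%E]) `&` [set r : R | (r%:E <= b)%E].
  by apply/seteqP; split => r /= [H1 H2]; split => //; [rewrite leNgt H1|move/negP: H1; rewrite -ltNge].
apply: measurableI => //; [apply: measurableC|]; exact: meas_le.
Qed.
Arguments meas_le {R}. Arguments meas_ioc {R}.
Arguments prbE {d T R} P. Arguments prb_ge0 {d T R} P. Arguments prb_le1 {d T R} P. Arguments prb_le {d T R} P.


Lemma indep_split (d : measure_display) (T : measurableType d) (R : realType)
  (P : probability T R) (I : finType) (F : I -> {RV P >-> R}) 
  (HF : mutually_independent F) x a b c :
  prb P ([set w | forall z, z != x -> ((F z w)%:E <= c)%E] `&` in_ioc F x a b)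
  = gx F x c * prb P (in_ioc F x a b).
Proof.
pose B z := if z == x then [set r : R | (a < r%:E)%E /\ (r%:E <= b)%E]
            else [set r : R | (r%:E <= c)%E].
have mB : forall z, measurable (B z).
  by move=> z; rewrite /B; case: ifP => _; [exact: meas_ioc|exact: meas_le].
have Hind := HF [set: I]%SET B mB.
have E : [set w | forall z, z != x -> ((F z w)%:E <= c)%E] `&` in_ioc F x a b
   = \big[setI/setT]_(i in [set: I]%SET) F i @^-1` B i.
  rewrite bigI_seq; apply/seteqP; split => w /=.
  - move=> [Hg Hj] z _ _; rewrite /B; case: eqP => [->|/eqP zx] //; exact: Hg.
  - move=> H; split.
    + move=> z zx; have := H z (mem_index_enum z) (finset.in_setT z).
      by rewrite /B (negbTE zx).
    + by have := H x (mem_index_enum x) (finset.in_setT x); rewrite /B eqxx.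
have mJ : measurable (in_ioc F x a b) by exact: (measurable_funPTI (F x) (meas_ioc a b)).
apply: EFin_inj; rewrite -prbE E; last by apply: bigsetI_measurable => i _; exact: measurable_funPTI.
rewrite Hind (bigD1 x) ?finset.in_setT //= EFinM [in RHS]muleC; congr (_ * _)%E.
- by rewrite prbE // /B eqxx.
- rewrite /gx -prodEFin; apply: eq_big => [z|z /andP[_ zx]]; first by rewrite !inE.
  rewrite /B (negbTE zx) prbE //; exact: measurable_funPTI (meas_le _).
Qed.


Theorem proposition8 (d : measure_display) (T : measurableType d) (R : realType)
  (P : probability T R) (I : finType) (F : I -> {RV P >-> R})
  (eps : R) (l : nat) (f : nat -> \bar R) :
  mutually_independent F ->
  0 < eps ->
  (forall i, (i < l)%N -> (f i <= f i.+1)%E) ->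
  f 0%N = -oo%E -> f l = +oo%E ->
  (forall x, prb P [set w | ((F x w)%:E <= f 1%N)%E] <= 2 * eps) ->
  (forall x, prb P [set w | (f l.-1 < (F x w)%:E)%E] <= 2 * eps) ->
  (forall x i, (1 <= i)%N -> (i <= l - 2)%N ->
     prb P (in_ioc F x (f i) (f i.+1)) <= 2 * eps) ->
  forall x : I,
    `| prb P (in_argmax F x)
       - \sum_(i < l) ((gx F x (f i.+1) + gx F x (f i)) / 2)
                        * prb P (in_ioc F x (f i) (f i.+1)) | <= eps.
Proof.
move=> HF eps0 fmono f0 fl H1 H2 H3 x.
set A := in_argmax F x.
have mA : measurable A.
  have -> : A = \big[setI/setT]_(z <- index_enum I) [set w | ((F z w)%:E <= (F x w)%:E)%E].
    rewrite bigI_seq; apply/seteqP; split => w /= H.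
    - by move=> z _ _; rewrite lee_fin; exact: H.
    - by move=> z; rewrite -lee_fin; exact: H z (mem_index_enum z) isT.
  apply: bigsetI_measurable => z _.
  have mE : forall y, measurable_fun [set: T] ((fun w => (F y w)%:E) : T -> \bar R).
    by move=> y; apply/measurable_EFinP; exact: measurable_funP.
  have := measurable_lee measurableT (mE z) (mE x).
  by rewrite setTI.
have mJ : forall a b, measurable (in_ioc F x a b).
  by move=> a b; exact: (measurable_funPTI (F x) (meas_ioc a b)).
have mG : forall c, measurable [set w | forall z, z != x -> ((F z w)%:E <= c)%E].
  move=> c.
  have -> : [set w | forall z, z != x -> ((F z w)%:E <= c)%E] =
     \big[setI/setT]_(z <- index_enum I | z != x) F z @^-1` [set r : R | (r%:E <= c)%E].
    rewrite bigI_seq; apply/seteqP; split => w /= H z.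
    - by move=> _; exact: H.
    - exact: H z (mem_index_enum z).
  apply: bigsetI_measurable => z _; exact: measurable_funPTI (meas_le c).
have fmon : forall i j, (i <= j <= l)%N -> (f i <= f j)%E.
  move=> i; elim=> [|j IH] /andP [ij jl].
    by rewrite leqn0 in ij; rewrite (eqP ij).
  case: (eqVneq i j.+1) => [-> //|nij].
  apply: le_trans (fmono j jl); apply: IH; apply/andP; split; [|exact: ltnW].
  by move: ij nij; lia.
pose J i := in_ioc F x (f i) (f i.+1).
have cover : forall w, exists i, (i < l)%N /\ J i w.
  move=> w.
  suff H : forall n, (n <= l)%N -> ((F x w)%:E <= f n)%E -> exists i, (i < n)%N /\ J i w.
    have Hl : ((F x w)%:E <= f l)%E by rewrite fl; exact: leey.
    by have [i [il Ji]] := H l (leqnn l) Hl; exists i.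
  elim=> [|n IH] nl Hn; first by move: Hn; rewrite f0 leeNy_eq.
  case: (leP ((F x w)%:E) (f n)) => h.
  - by have [i [iln Ji]] := IH (ltnW nl) h; exists i; split => //; exact: ltnW.
  - by exists n; split => //; split.
have disj : forall i j w, (i < j)%N -> (j <= l)%N -> J i w -> J j w -> False.
  move=> i j w ij jl [_ Hi] [Hj _].
  have := fmon i.+1 j (introT andP (conj ij jl)).
  by move=> /(le_trans Hi) /(lt_le_trans Hj); rewrite ltxx.
have Hsum : prb P A = \sum_(i < l) prb P (A `&` J i).
  have E : A = \big[setU/set0]_(k < l) (A `&` J k).
    apply/seteqP; split => w.
    - move=> Aw; apply/bigU_seqP; have [i [il Ji]] := cover w.
      by exists (Ordinal il); split => //; exact: mem_index_enum.
    - by move/bigU_seqP => [i [_ _ [Aw _]]].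
  apply: EFin_inj; rewrite -prbE // -sumEFin {1}E measure_semi_additive_ord //.
  - by apply: eq_bigr => i _; apply: prbE; exact: measurableI mA (mJ _ _).
  - by move=> k; exact: measurableI mA (mJ _ _).
  - move=> i j _ _ [w [[_ Ji] [_ Jj]]]; apply/val_inj.
    case: (ltngtP i j) => // h; exfalso.
    + exact: disj h (ltnW (ltn_ord j)) Ji Jj.
    + exact: disj h (ltnW (ltn_ord i)) Jj Ji.
  - by rewrite -E.
pose g i := gx F x (f i).
pose p i := prb P (J i).
have Hb : forall i, (i < l)%N ->
    g i * p i <= prb P (A `&` J i) <= g i.+1 * p i.
  move=> i il; rewrite /g /p /J -!indep_split //; apply/andP; split.
  - apply: prb_le; [exact: measurableI (mG _) (mJ _ _)|exact: measurableI mA (mJ _ _)|].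
    move=> w [Hg [J1 J2]]; split; last by split.
    move=> z; case: (eqVneq z x) => [-> //|zx].
    by rewrite -lee_fin; apply/ltW/(le_lt_trans (Hg z zx) J1).
  - apply: prb_le; [exact: measurableI mA (mJ _ _)|exact: measurableI (mG _) (mJ _ _)|].
    move=> w [Aw [J1 J2]]; split; last by split.
    by move=> z zx; apply: le_trans J2; rewrite lee_fin; exact: Aw.
have gmon : forall c c', (c <= c')%E -> gx F x c <= gx F x c'.
  move=> c c' cc'; apply: ler_prod => z _; apply/andP; split; first exact: prb_ge0.
  apply: prb_le; [exact: measurable_funPTI (meas_le c)|exact: measurable_funPTI (meas_le c')|].
  by move=> w /= h; exact: le_trans h cc'.
have g0 : 0 <= g 0%N by apply: prodr_ge0 => z _; exact: prb_ge0.
have gl : g l <= 1.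
  apply: prodr_ile1 => z _; apply/andP; split; first exact: prb_ge0.
  by apply: prb_le1; exact: measurable_funPTI (meas_le _).
have Hp : forall i, (i < l)%N -> p i <= 2 * eps.
  move=> [|i] il.
  - rewrite /p /J f0.
    have -> : in_ioc F x -oo%E (f 1%N) = [set w | ((F x w)%:E <= f 1%N)%E].
      by apply/seteqP; split => w /=; [case|split => //; exact: ltNyr].
    exact: H1.
  - case: (eqVneq i.+2 l) => [el|nl].
    + rewrite /p /J.
      have -> : in_ioc F x (f i.+1) (f i.+2) = [set w | (f l.-1 < (F x w)%:E)%E].
        rewrite -el /=; apply/seteqP; split => w /=; [by case|split => //].
        by rewrite el fl; exact: leey.
      exact: H2.
    + by apply: H3 => //; move: il nl; lia.
rewrite Hsum -sumrB; apply: le_trans (ler_norm_sum _ _ _) _.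
apply: (@le_trans _ _ (\sum_(i < l) (g i.+1 - g i) * eps)).
  apply: ler_sum => i _.
  have /andP [lo hi] := Hb i (ltn_ord i).
  have pe := Hp i (ltn_ord i).
  have p0 : 0 <= p i by exact: prb_ge0.
  have gg : g i <= g i.+1 by apply: gmon; exact: fmono.
  rewrite -/(p i) -/(g i) -/(g i.+1).
  rewrite ler_norml; apply/andP; split; nra.
rewrite -mulr_suml.
have -> : \sum_(i < l) (g i.+1 - g i) = g l - g 0%N.
  by rewrite -(big_mkord xpredT (fun i => g i.+1 - g i)) telescope_sumr.
nra.
Qed.
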